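(* Let $q$ be a prime power, $v\ge2$, and let $u,m\ge0$ and $\Delta\ge1$ be integers. Let $\mathcal{C}$ be a set of points of $\mathrm{PG}(v-1,q)$ with $|\mathcal{C}|=u+m\Delta$ such that every hyperplane $H$ satisfies $|\mathcal{C}\cap H|\in\{u,u+\Delta,\dots,u+m\Delta\}$. Then $u<\frac{m\Delta}{q-1}$ or $u=m=0$.
   Context: $\mathrm{PG}(v-1,q)$ is the set of $1$-dimensional subspaces (points) of $\mathbb{F}_q^v$; hyperplanes are the $(v-1)$-dimensional subspaces of $\mathbb{F}_q^v$, and $\mathcal{C}\cap H$ is the set of points of $\mathcal{C}$ contained in $H$. *)

(* Defs.v *)
From mathcomp Require Import all_boot all_algebra all_field.
Set Implicit Arguments. Unset Strict Implicit. Unset Printing Implicit Defensive.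
Import GRing.Theory Num.Theory.

(* Subspaces of F^v (row vectors 'rV[F]_v) are represented canonically by
   square matrices A with <<A>>%MS = A (the canonical generator of the row
   space, mxalgebra's genmx); the subspace is the row space of A and its
   dimension is \rank A. *)
Definition is_subspace (F : fieldType) (v : nat) (A : 'M[F]_v) : bool :=
  (<<A>>%MS == A).

Definition PG_point (F : fieldType) (v : nat) (A : 'M[F]_v) : bool :=
  is_subspace A && (\rank A == 1%N).

Definition PG_hyperplane (F : fieldType) (v : nat) (A : 'M[F]_v) : bool :=
  is_subspace A && (\rank A == v.-1).

Definition pts_in (F : finFieldType) (v : nat) (C : {set 'M[F]_v}) (H : 'M[F]_v)
  : {set 'M[F]_v} := [set P in C | (P <= H)%MS].

(* Main.v *)
Require Import Defs.
From mathcomp Require Import all_boot all_algebra all_field.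
From mathcomp Require Import zify.
Set Implicit Arguments. Unset Strict Implicit. Unset Printing Implicit Defensive.
Import GRing.Theory Num.Theory.

Local Open Scope ring_scope.
Section Aux.
Variables (F : finFieldType) (v : nat).

Lemma point_vec (P : 'M[F]_v) : \rank P = 1%N ->
  exists2 p : 'rV[F]_v, p != 0 & forall B : 'M[F]_(v, 1),
    (P <= kermx B)%MS = (p *m B == 0)%R.
Proof.
move=> rP.
have [i ri] : exists i, row i P != 0.
  apply/existsP; apply: contraT; rewrite negb_exists => /forallP H.
  have P0 : P = 0 by apply/row_matrixP => i; rewrite row0; exact/eqP/negbNE/H.
  by move: rP; rewrite P0 mxrank0.
exists (row i P) => // B.
have sPp : (P <= row i P)%MS.
  have := mxrank_leqif_sup (row_sub i P); rewrite rP rank_rV ri => -[_ <-].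
  by [].
rewrite -sub_kermx; apply/idP/idP => H.
  exact: submx_trans (row_sub i P) H.
exact: submx_trans sPp H.
Qed.

Lemma count_K (p : 'rV[F]_v) : p != 0 ->
  (#|[set w : 'rV[F]_v | (p *m w^T == 0)%R]| * #|F| <= #|F| ^ v)%N.
Proof.
move=> p0.
have [k pk] : exists k, p 0 k != 0.
  apply/existsP; apply: contraT; rewrite negb_exists => /forallP H.
  suff : p = 0 by move/eqP; rewrite (negbTE p0).
  by apply/matrixP => i j; rewrite mxE ord1; exact/eqP/negbNE/H.
set w0 : 'rV[F]_v := (p 0 k)^-1 *: delta_mx 0 k.
have pw0 : (p *m w0^T = 1%:M)%R.
  rewrite /w0 linearZ /= trmx_delta -scalemxAr -colE.
  rewrite [col k p]mx11_scalar mxE scale_scalar_mx mulVf //.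

clearbody w0.
set K := [set w : 'rV[F]_v | (p *m w^T == 0)%R].
pose f (x : 'rV[F]_v * F) := (x.1 + x.2 *: w0)%R.
have finj : {in setX K [set: F] &, injective f}.
  move=> [w c] [w' c'] /setXP [] /= + _ /setXP [] /= + _.
  rewrite !inE => /eqP Hw /eqP Hw' /= E.
  have : (p *m (f (w, c))^T = p *m (f (w', c'))^T)%R by rewrite E.
  rewrite /f /= !linearD /= !linearZ /= Hw Hw' pw0 !add0r.
  move=> /(congr1 (fun M : 'M[F]_1 => M 0 0)); rewrite !mxE /= !mulr1n !mulr1 => Ec.
  by move: E; rewrite /f /= Ec => /addIr ->.
have := subset_leq_card (subsetT [set f x | x in setX K [set: F]]).
rewrite card_in_imset // cardsX !cardsT.
by rewrite (card_mx F 1 v) mul1n.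
Qed.

End Aux.

Lemma card_sep (T : finType) (A : {set T}) (b : pred T) :
  #|[set x in A | b x]| = (\sum_(x in A) b x)%N.
Proof.
rewrite -sum1_card big_mkcond [RHS]big_mkcond /=; apply: eq_bigr => x _.
by rewrite !inE; case: (x \in A); case: (b x).
Qed.

Lemma arith (q u n N : nat) : (2 <= q)%N -> (q <= N)%N -> (u <= n)%N ->
  (q * u * (N - 1) <= n * (N - q))%N -> (0 < u)%N -> (q * u < n)%N.
Proof.
move=> q2 qN un H u0; rewrite ltnNge; apply/negP => Hn.
have n0 : (0 < n)%N by apply: leq_trans un.
have : (n * (N - 1) <= q * u * (N - 1))%N by rewrite leq_mul2r Hn orbT.
move=> H2; have := leq_trans H2 H.
have : (n * (N - q) < n * (N - 1))%N by rewrite ltn_pmul2l //; lia.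
move=> H3 H4; have := leq_ltn_trans H4 H3; by rewrite ltnn.
Qed.

Theorem corollary5p4 (F : finFieldType) (q v u m Delta : nat) :
  #|F| = q -> (2 <= v)%N -> (1 <= Delta)%N ->
  forall C : {set 'M[F]_v},
    (forall P, P \in C -> PG_point P) ->
    #|C| = (u + m * Delta)%N ->
    (forall H : 'M[F]_v, PG_hyperplane H ->
       exists2 i : nat, (i <= m)%N & #|pts_in C H| = (u + i * Delta)%N) ->
    ((u%:R : rat) < (m * Delta)%:R / (q.-1)%:R)%R \/ (u = 0%N /\ m = 0%N).
Proof.
move=> Fq v2 D1 C Cpt Ccard Hyp.
have q2 : (2 <= q)%N by rewrite -Fq; exact: finNzRing_gt1.
pose Hw (w : 'rV[F]_v) := (<<kermx w^T>>)%MS.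
have Hhyp w : w != 0 -> PG_hyperplane (Hw w).
  move=> w0; rewrite /PG_hyperplane /is_subspace /Hw genmx_id eqxx /=.
  by rewrite mxrank_gen mxrank_ker mxrank_tr rank_rV w0 subn1.
pose W := [set~ (0 : 'rV[F]_v)].
pose S := (\sum_(w in W) #|pts_in C (Hw w)|)%N.
have lower : (u * #|W| <= S)%N.
  rewrite mulnC -sum_nat_const; apply: leq_sum => w; rewrite in_setC1 => w0.
  by have [i _ ->] := Hyp _ (Hhyp w w0); rewrite leq_addr.
have exch : S = (\sum_(P in C) #|[set w in W | (P <= Hw w)%MS]|)%N.
  rewrite /S /pts_in.
  under eq_bigr do rewrite card_sep.
  rewrite exchange_big /=; apply: eq_bigr => P _.
  by rewrite card_sep.
set N := (q ^ v)%N.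
have Nq : (q <= N)%N.
  rewrite /N -{1}(expn1 q); apply: leq_pexp2l; lia.
have upper : (q * S <= #|C| * (N - q))%N.
  rewrite exch big_distrr /= -sum_nat_const; apply: leq_sum => P PC.
  have /andP [_ /eqP rP] := Cpt P PC.
  have [p p0 Hp] := point_vec rP.
  have := count_K p0; rewrite Fq -/N.
  set K := [set w : 'rV[F]_v | (p *m w^T == 0)%R].
  have K0 : (0 : 'rV[F]_v) \in K by rewrite inE trmx0 mulmx0.
  have sub : [set w in W | (P <= Hw w)%MS] \subset K :\ 0.
    apply/subsetP => w; rewrite !inE /Hw genmxE Hp => /andP [-> ->].
    by [].
  have := subset_leq_card sub.
  rewrite (cardsD1 0 K) K0 add1n => H1 H2.
  have : (q * #|[set w in W | (P <= Hw w)%MS]| <= q * #|K :\ (0%R : 'rV[F]_v)|)%N.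
    by rewrite leq_mul2l H1 orbT.
  move=> H3; apply: (leq_trans H3); move: H2; rewrite mulSn mulnC => H2; rewrite leq_subRL // addnC; exact: H2.
have cardW : #|W| = (N - 1)%N.
  by rewrite /W cardsC1 (card_mx F 1 v) mul1n Fq subn1.
have key : (q * u * (N - 1) <= #|C| * (N - q))%N.
  rewrite -cardW -mulnA; apply: leq_trans upper; by rewrite leq_mul2l lower orbT.
have [u0|upos] := posnP u.
  have [m0|mpos] := posnP m; first by right.
  left; rewrite u0 ltr_pdivlMr ?mul0r ?ltr0n //; try lia.
left.
have := arith q2 Nq _ key upos; rewrite Ccard => /(_ (leq_addr _ _)) H.
rewrite ltr_pdivlMr ?ltr0n; last by lia.
rewrite -natrM ltr_nat; lia.
Qed.
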